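(* The map $\pi\mapsto\mathbf w(\pi)$ is a bijection from the set of extended link patterns on $\{1,\dots,N\}$ to the set of words of length $N$ (elements of $\{0,1\}^N$).
   Context: A link pattern on a finite totally ordered set is a partition of it into pairs that are pairwise noncrossing (no $i<j<k<\ell$ with $\{i,k\}$ and $\{j,\ell\}$ both pairs). An extended link pattern $\pi$ on $\{1,\dots,N\}$ consists of integers $1\le\ell_1<\dots<\ell_a$ (left points) and $r_1<\dots<r_b\le N$ (right points), $a,b\ge 0$, with $\ell_a<r_1$ when both are present, together with a link pattern on each maximal interval of integers of $\{1,\dots,N\}$ containing none of the left or right points. The word $\mathbf w(\pi)=w_1\cdots w_N$ is defined by $w_{\ell_k}=1$ for left points, $w_{r_k}=0$ for right points, and, for each pair $\{i,j\}$ with $i<j$ of one of the link patterns, $w_i=0$ and $w_j=1$. *)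

(* Defs.v *)
From mathcomp Require Import all_boot.
Set Implicit Arguments. Unset Strict Implicit. Unset Printing Implicit Defensive.

(* Points {1,...,N} are represented by 'I_N = {0,...,N-1} (order-preserving shift).
   An extended link pattern is a triple (L, R, P):
   L = set of left points, R = set of right points (a strictly increasing
   sequence is the same as a finite set), P = set of oriented pairs (i, j)
   with i < j, forming the union of the link patterns on the maximal
   intervals of unmarked points. *)

Definition elp_data (N : nat) :=
  ({set 'I_N} * {set 'I_N} * {set ('I_N * 'I_N)})%type.

Definition is_elp (N : nat) (L R : {set 'I_N}) (P : {set ('I_N * 'I_N)}) : bool :=
  [&&
      [forall l in L, forall r in R, l < r],
      [forall p in P, p.1 < p.2],
      [forall p in P, (p.1 \notin L :|: R) && (p.2 \notin L :|: R)],
      [forall p in P, forall k in L :|: R, ~~ ((p.1 < k) && (k < p.2))],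
      [forall i : 'I_N, (i \notin L :|: R) ==>
          (#|[set p in P | (p.1 == i) || (p.2 == i)]| == 1)] &
      [forall p in P, forall q in P,
          ~~ [&& p.1 < q.1, q.1 < p.2 & p.2 < q.2]]].

Definition ext_link_pattern (N : nat) :=
  {x : elp_data N | is_elp x.1.1 x.1.2 x.2}.

Definition word (N : nat) (pi : ext_link_pattern N) : {ffun 'I_N -> bool} :=
  let: L := (val pi).1.1 in
  let: P := (val pi).2 in
  [ffun i => (i \in L) || [exists p in P, p.2 == i]].

(* Main.v *)
Require Import Defs.
From mathcomp Require Import all_boot.
From mathcomp Require Import zify.
Set Implicit Arguments. Unset Strict Implicit. Unset Printing Implicit Defensive.

Section S.
Variable N : nat.

Definition wd (L : {set 'I_N}) (P : {set ('I_N * 'I_N)}) (i : 'I_N) :=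
  (i \in L) || [exists p in P, p.2 == i].

Lemma elpP (L R : {set 'I_N}) (P : {set ('I_N * 'I_N)}) : is_elp L R P ->
  [/\ (forall l r, l \in L -> r \in R -> l < r),
      (forall p, p \in P -> p.1 < p.2),
      (forall p, p \in P -> (p.1 \notin L :|: R) /\ (p.2 \notin L :|: R)),
      (forall p k, p \in P -> k \in L :|: R -> ~~ ((p.1 < k) && (k < p.2))) &
      ((forall i, i \notin L :|: R -> #|[set p in P | (p.1 == i) || (p.2 == i)]| == 1) /\
      (forall p q, p \in P -> q \in P -> ~~ [&& p.1 < q.1, q.1 < p.2 & p.2 < q.2]))].
Proof.
case/and5P => /forall_inP h1 /forall_inP h2 /forall_inP h3 /forall_inP h4
  /andP[/forallP h5 /forall_inP h6].
split; last split.
- by move=> l r /h1 /forall_inP; apply.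
- exact: h2.
- by move=> p /h3 /andP.
- by move=> p k /h4 /forall_inP; apply.
- by move=> i; move: (h5 i) => /implyP.
- by move=> p q /h6 /forall_inP; apply.
Qed.

Section E.
Variables (L R : {set 'I_N}) (P : {set ('I_N * 'I_N)}).
Hypothesis H : is_elp L R P.

Lemma uniqP p q i : p \in P -> q \in P -> (p.1 == i) || (p.2 == i) ->
  (q.1 == i) || (q.2 == i) -> p = q.
Proof.
case: (elpP H) => _ _ h3 _ [h5 _] hp hq hpi hqi.
have hi : i \notin L :|: R.
  by case/orP: hpi => /eqP <-; case: (h3 p hp).
case/cards1P: (h5 i hi) => x hx.
have : p \in [set x] by rewrite -hx inE hp.
have : q \in [set x] by rewrite -hx inE hq.
by rewrite !inE => /eqP -> /eqP ->.
Qed.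

Lemma ex_pair i : i \notin L :|: R -> exists2 p, p \in P & (p.1 == i) || (p.2 == i).
Proof.
case: (elpP H) => _ _ _ _ [h5 _] hi.
case/cards1P: (h5 i hi) => x hx.
have : x \in [set p in P | (p.1 == i) || (p.2 == i)] by rewrite hx set11.
by rewrite inE => /andP[]; exists x.
Qed.
End E.

Lemma ordeq (a b : 'I_N) : (a == b) = (nat_of_ord a == nat_of_ord b).
Proof. by rewrite -val_eqE. Qed.

Lemma one_dir (L1 R1 : {set 'I_N}) P1 (L2 R2 : {set 'I_N}) P2 :
  is_elp L1 R1 P1 -> is_elp L2 R2 P2 ->
  (forall i, wd L1 P1 i = wd L2 P2 i) ->
  forall p, p \in P1 ->
  (forall q : 'I_N * 'I_N, q.2 - q.1 < p.2 - p.1 -> (q \in P1) = (q \in P2)) ->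
  p \in P2.
Proof.
move=> H1 H2 hw [i j] hp hs /=; rewrite /= in hs.
case: (elpP H1) => a1 b1 c1 d1 [e1 f1].
case: (elpP H2) => a2 b2 c2 d2 [e2 f2].
have hij := b1 _ hp; rewrite /= in hij.
have A : forall x : 'I_N, i < x -> x < j -> exists q1 q2, [/\ (q1, q2) \in P2,
   (q1 == x) || (q2 == x), i < q1 & q2 < j].
  move=> x hx1 hx2.
  have hxm : x \notin L1 :|: R1.
    by apply/negP => hm; move: (d1 _ x hp hm); rewrite /= hx1 hx2.
  case: (ex_pair H1 hxm) => [[q1 q2]] hq /= hqx.
  have hq12 := b1 _ hq; rewrite /= in hq12.
  have hq1 : i < q1.
    case: (ltngtP i q1) => // h.
    - have hx : nat_of_ord q2 = x by move: hqx; rewrite !ordeq; lia.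
      by move: (f1 _ _ hq hp); rewrite /= h hx hx1 hx2.
    - have := uniqP H1 hp hq (i := i); rewrite /= eqxx /= !ordeq h eqxx => /(_ isT isT) [_ epq].
      by move: hqx; rewrite -epq !ordeq; lia.
  have hq2 : q2 < j.
    case: (ltngtP q2 j) => // h.
    - have hx : nat_of_ord q1 = x by move: hqx; rewrite !ordeq; lia.
      by move: (f1 _ _ hp hq); rewrite /= h hx hx1 hx2.
    - have := uniqP H1 hp hq (i := j); rewrite /= eqxx orbT /= !ordeq h eqxx orbT => /(_ isT isT) [epq _].
      by move: hqx; rewrite -epq !ordeq; lia.
  have hq' : (q1, q2) \in P2 by rewrite -(hs (q1, q2)) //= ; lia.
  by exists q1, q2.
have wi : wd L2 P2 i = false.
  rewrite -hw /wd; apply/negbTE; rewrite negb_or; apply/andP; split.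
  - case: (c1 _ hp) => /= /negP h _; apply/negP => hL; apply: h; by rewrite inE hL.
  - apply/existsP => [[[q1 q2] /andP[hq /eqP /= hq2]]].
    have [_ ej] : (i, j) = (q1, q2) by apply: (uniqP H1 hp hq (i := i)); rewrite /= ?hq2 eqxx ?orbT.
    by move: hij; rewrite ej hq2 ltnn.
have wj : wd L2 P2 j = true.
  rewrite -hw /wd; apply/orP; right; apply/existsP; exists (i, j); by rewrite hp eqxx.
have hi2 : (i \in R2) \/ exists k, (i, k) \in P2 /\ j <= k.
  move: wi; rewrite /wd => /norP [hiL hiP].
  case hm : (i \in L2 :|: R2).
    by left; move: hm; rewrite inE (negbTE hiL).
  right; case: (ex_pair H2 (negbT hm)) => [[q1 q2]] hq /= hqi.
  have hq1 : q1 = i.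
    case/orP: hqi => /eqP // hq2.
    by case/negP: hiP; apply/existsP; exists (q1, q2); rewrite hq hq2 eqxx.
  subst q1; exists q2; split => //.
  rewrite leqNgt; apply/negP => hlt.
  have hb := b2 _ hq; rewrite /= in hb.
  case: (A q2 hb hlt) => r1 [r2 [hr hrq ir1 _]].
  have [er _] : (i, q2) = (r1, r2) by apply: (uniqP H2 hq hr (i := q2)); rewrite /= ?eqxx ?orbT.
  by move: ir1; rewrite -er ltnn.
have hj2 : (j \in L2) \/ exists m, (m, j) \in P2 /\ m <= i.
  move: wj; rewrite /wd => /orP [hjL | /existsP [[q1 q2] /andP [hq /eqP /= hq2]]].
    by left.
  subst q2; right; exists q1; split => //.
  rewrite leqNgt; apply/negP => hlt.
  have hb := b2 _ hq; rewrite /= in hb.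
  case: (A q1 hlt hb) => r1 [r2 [hr hrq _ r2j]].
  have [_ er] : (q1, j) = (r1, r2) by apply: (uniqP H2 hq hr (i := q1)); rewrite /= ?eqxx ?orbT.
  by move: r2j; rewrite -er ltnn.
case: hi2 => [hiR | [k [hik hjk]]].
  case: hj2 => [hjL | [m [hmj hmi]]].
    by move: (a2 _ _ hjL hiR); lia.
  have [em | hm] := eqVneq m i; first by rewrite -em.
  move: (d2 _ i hmj); rewrite /= inE hiR orbT hij andbT => /(_ isT).
  by move: hm; rewrite ordeq; lia.
have [ek | hk] := eqVneq k j; first by rewrite -ek.
case: hj2 => [hjL | [m [hmj hmi]]].
  move: (d2 _ j hik); rewrite /= inE hjL hij => /(_ isT).
  by move: hk; rewrite ordeq; lia.
have [em | hm] := eqVneq m i; first by rewrite -em.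
move: (f2 _ _ hmj hik) => /=.
by move: hm hk; rewrite !ordeq; lia.
Qed.


Lemma Lsub (L1 R1 L2 : {set 'I_N}) P : is_elp L1 R1 P ->
  (forall i, wd L1 P i = wd L2 P i) -> L1 \subset L2.
Proof.
move=> H1 hw; apply/subsetP => i hi.
have := hw i; rewrite /wd hi /= => /esym /orP [//|/existsP [q /andP [hq /eqP hq2]]].
case: (elpP H1) => _ _ c1 _ _.
by case: (c1 q hq) => _; rewrite hq2 inE hi.
Qed.

Lemma Rsub (L R1 R2 : {set 'I_N}) P : is_elp L R1 P -> is_elp L R2 P -> R1 \subset R2.
Proof.
move=> H1 H2; apply/subsetP => i hi.
case: (elpP H1) => a1 _ c1 _ _.
have hiL : i \notin L by apply/negP => hL; move: (a1 i i hL hi); rewrite ltnn.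
apply/negPn/negP => hiR.
have hm : i \notin L :|: R2 by rewrite inE negb_or hiL.
case: (ex_pair H2 hm) => q hq /orP [] /eqP hqi; case: (c1 q hq) => /negP h1 /negP h2.
  by apply: h1; rewrite hqi !inE hi orbT.
by apply: h2; rewrite hqi !inE hi orbT.
Qed.

Lemma word_inj : injective (@word N).
Proof.
move=> [[[L1 R1] P1] H1] [[[L2 R2] P2] H2] hw.
have hw' : forall i, wd L1 P1 i = wd L2 P2 i.
  by move=> i; have := congr1 (fun f : {ffun 'I_N -> bool} => f i) hw; rewrite /word /= !ffunE.
have H1' : is_elp L1 R1 P1 := H1.
have H2' : is_elp L2 R2 P2 := H2.
have eP : forall n (q : 'I_N * 'I_N), q.2 - q.1 < n -> (q \in P1) = (q \in P2).
  elim=> [//|n IH] [q1 q2] /= hq; apply/idP/idP => hin.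
  - by apply: (one_dir H1' H2' hw' hin) => [[q1' q2']] /= hq'; apply: IH => /=; lia.
  - apply: (one_dir H2' H1' _ hin) => [i|[q1' q2'] /= hq']; first by rewrite hw'.
    by rewrite IH //=; lia.
have eP' : P1 = P2 by apply/setP => q; exact: (eP _ q (ltnSn _)).
subst P2.
have eL : L1 = L2.
  have s1 := Lsub H1' hw'.
  have s2 : L2 \subset L1 by apply: (@Lsub L2 R2 L1 P1 H2') => i; rewrite hw'.
  by apply/eqP; rewrite eqEsubset s1 s2.
subst L2.
have eR : R1 = R2 by apply/eqP; rewrite eqEsubset (Rsub H1' H2') (Rsub H2' H1').
subst R2.
by apply: val_inj.
Qed.

Section Surj.
Variable w : {ffun 'I_N -> bool}.

Definition good k (L R : {set 'I_N}) (P : {set ('I_N * 'I_N)}) : Prop :=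
 [/\ (forall l r, l \in L -> r \in R -> l < r),
     (forall p, p \in P -> p.1 < p.2 /\ p.2 < k),
     (forall p, p \in P -> (p.1 \notin L :|: R) /\ (p.2 \notin L :|: R)),
     (forall p y, p \in P -> y \in L :|: R -> ~~ ((p.1 < y) && (y < p.2))) &
     [/\ (forall i : 'I_N, i < k -> i \notin L :|: R ->
            #|[set p in P | (p.1 == i) || (p.2 == i)]| == 1),
      (forall p q, p \in P -> q \in P -> ~~ [&& p.1 < q.1, q.1 < p.2 & p.2 < q.2]),
      (forall y, y \in L :|: R -> y < k) &
      (forall i : 'I_N, i < k -> wd L P i = w i)]].

Lemma good0 : good 0 set0 set0 set0.
Proof.
split; [| | | |split].
- by move=> l r; rewrite inE.
- by move=> p; rewrite inE.
- by move=> p; rewrite inE.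
- by move=> p y; rewrite inE.
- by [].
- by move=> p q; rewrite inE.
- by move=> y; rewrite !inE.
- by [].
Qed.

Lemma good_elp L R P : good N L R P -> is_elp L R P /\ forall i, wd L P i = w i.
Proof.
case=> a b c d [e f g h]; split; last by move=> i; apply: h.
apply/and5P; split.
- by apply/forall_inP => l hl; apply/forall_inP => r hr; apply: a.
- by apply/forall_inP => p /b [].
- by apply/forall_inP => p /c [-> ->].
- by apply/forall_inP => p hp; apply/forall_inP => y hy; apply: d.
apply/andP; split.
- by apply/forallP => i; apply/implyP; apply: e.
- by apply/forall_inP => p hp; apply/forall_inP => q hq; apply: f.
Qed.

Lemma ex_setU1 (a : 'I_N * 'I_N) (P : {set ('I_N * 'I_N)}) (i : 'I_N) :
  [exists p in a |: P, p.2 == i] = (a.2 == i) || [exists p in P, p.2 == i].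
Proof.
apply/existsP/orP => [[p /andP [] ]|[h|/existsP [p /andP [hp h]]]].
- rewrite in_setU1 => /orP [/eqP -> ->|hp hpi]; first by left.
  by right; apply/existsP; exists p; rewrite hp.
- by exists a; rewrite setU11.
- by exists p; rewrite in_setU1 hp orbT.
Qed.

Lemma stepR k (hk : k < N) L R P : good k L R P -> w (Ordinal hk) = false ->
  good k.+1 L (Ordinal hk |: R) P.
Proof.
set x := Ordinal hk.
case=> a b c d [e f g h] hw.
have nx : forall y : 'I_N, y < k -> (y == x) = false.
  by move=> y hy; apply/negbTE; rewrite ordeq /= neq_ltn hy.
have eM : L :|: (x |: R) = x |: (L :|: R) by rewrite setUCA.
split; [| | | |split]; rewrite ?eM.
- move=> l r hl; rewrite in_setU1 => /orP [/eqP -> | hr]; last exact: a.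
  by apply: g; rewrite inE hl.
- by move=> p /b [h1 h2]; split => //; apply: ltnW.
- move=> p hp; case: (c p hp) (b p hp) => h1 h2 [h3 h4].
  by rewrite !in_setU1 !nx //; apply: ltn_trans h4.
- move=> [p1 p2] y hp; rewrite in_setU1 => /orP [/eqP -> | hy]; last exact: d.
  case: (b _ hp) => /= _ h2; apply/negP => /andP [_ hh]; move: hh h2 => /=; lia.
- move=> i hi; rewrite in_setU1 negb_or => /andP [hix him].
  apply: e => //; move: hix; rewrite ordeq /=; lia.
- exact: f.
- move=> y; rewrite in_setU1 => /orP [/eqP -> //| hy].
  exact: ltnW (g y hy).
- move=> i hi; have [-> | hix] := eqVneq i x.
    rewrite hw /wd; apply/negbTE; rewrite negb_or; apply/andP; split.
      by apply/negP => hl; have := g x; rewrite inE hl ltnn => /(_ isT).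
    apply/existsP => [[p /andP [hp /eqP hp2]]].
    by case: (b p hp) => _; rewrite hp2 ltnn.
  by apply: h; move: hix; rewrite ordeq /=; lia.
Qed.

Lemma stepL k (hk : k < N) L R P : good k L R P -> R = set0 ->
  w (Ordinal hk) = true -> good k.+1 (Ordinal hk |: L) R P.
Proof.
set x := Ordinal hk.
case=> a b c d [e f g h] hR0 hw.
have nx : forall y : 'I_N, y < k -> (y == x) = false.
  by move=> y hy; apply/negbTE; rewrite ordeq /= neq_ltn hy.
have eM : (x |: L) :|: R = x |: (L :|: R) by rewrite setUA.
split; [| | | |split]; rewrite ?eM.
- by move=> l r _; rewrite hR0 inE.
- by move=> p /b [h1 h2]; split => //; apply: ltnW.
- move=> p hp; case: (c p hp) (b p hp) => h1 h2 [h3 h4].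
  by rewrite !in_setU1 !nx //; apply: ltn_trans h4.
- move=> [p1 p2] y hp; rewrite in_setU1 => /orP [/eqP -> | hy]; last exact: d.
  case: (b _ hp) => /= _ h2; apply/negP => /andP [_ hh]; move: hh h2 => /=; lia.
- move=> i hi; rewrite in_setU1 negb_or => /andP [hix him].
  apply: e => //; move: hix; rewrite ordeq /=; lia.
- exact: f.
- move=> y; rewrite in_setU1 => /orP [/eqP -> //| hy].
  exact: ltnW (g y hy).
- move=> i hi; have [-> | hix] := eqVneq i x.
    by rewrite hw /wd setU11.
  rewrite /wd in_setU1 (negbTE hix) /=.
  by apply: h; move: hix; rewrite ordeq /=; lia.
Qed.

Lemma stepP k (hk : k < N) L R P (r : 'I_N) : good k L R P -> r \in R ->
  (forall j, j \in R -> j <= r) ->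
  w (Ordinal hk) = true -> good k.+1 L (R :\ r) ((r, Ordinal hk) |: P).
Proof.
set x := Ordinal hk.
case=> a b c d [e f g h] hr rmax hw.
have nx : forall y : 'I_N, y < k -> (y == x) = false.
  by move=> y hy; apply/negbTE; rewrite ordeq /= neq_ltn hy.
have sM : forall y, y \in L :|: (R :\ r) -> y \in L :|: R.
  by move=> y; rewrite !inE => /orP [->|/andP [_ ->]]; rewrite ?orbT.
have rk : r < k by apply: g; rewrite inE hr orbT.
have rL : r \notin L by apply/negP => hl; move: (a r r hl hr); rewrite ltnn.
have xM : x \notin L :|: R by apply/negP => /g; rewrite ltnn.
split; [| | | |split].
- by move=> l r' hl; rewrite inE => /andP [_]; apply: a.
- move=> p; rewrite in_setU1 => /orP [/eqP -> //| /b [h1 h2]].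
  by split => //; apply: ltnW.
- move=> p; rewrite in_setU1 => /orP [/eqP -> /=| hp].
    split; last by apply/negP => /sM; apply/negP.
    by rewrite !inE negb_or rL /= eqxx.
  by case: (c p hp) => h1 h2; split; apply/negP => /sM; apply/negP.
- move=> p y; rewrite in_setU1 => /orP [/eqP -> /=| hp] hy; last by apply: d => //; apply: sM.
  move: hy; rewrite !inE => /orP [hy|/andP [hyr hy]].
    by rewrite ltnNge ltnW //; apply: a.
  have := rmax y hy; move: hyr; rewrite ordeq => hyr hyle.
  by rewrite ltnNge; apply/nandP; left; rewrite negbK; lia.
- move=> i hi hiM.
  have [ei | hix] := eqVneq i x.
    subst i; apply/cards1P; exists (r, x); apply/setP => [[p1 p2]].
    rewrite !inE; have [ep | hp] := eqVneq (p1, p2) (r, x).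
      by rewrite ep /= eqxx orbT.
    rewrite /=; apply/negbTE/nandP => /=.
    case hP : ((p1, p2) \in P); last by left.
    by right; case: (b _ hP) => /= h1 h2; rewrite !nx //; apply: ltn_trans h2.
  have [ei | hir] := eqVneq i r.
    subst i; apply/cards1P; exists (r, x); apply/setP => [[p1 p2]].
    rewrite !inE; have [ep | hp] := eqVneq (p1, p2) (r, x).
      by rewrite ep /= eqxx.
    rewrite /=; apply/negbTE/nandP => /=.
    case hP : ((p1, p2) \in P); last by left.
    right; case: (c _ hP) => /= h1 h2; apply/negP => /orP [] /eqP ee.
      by move: h1; rewrite ee inE hr orbT.
    by move: h2; rewrite ee inE hr orbT.
  have hik : i < k by move: hix; rewrite ordeq /=; lia.
  have hiM' : i \notin L :|: R.
    by move: hiM; rewrite !inE hir.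
  have -> : [set p in (r, x) |: P | (p.1 == i) || (p.2 == i)] =
            [set p in P | (p.1 == i) || (p.2 == i)].
    apply/setP => p; rewrite !inE.
    have [-> /=| //] := eqVneq p (r, x).
    by rewrite ![_ == i]eq_sym (negbTE hir) (negbTE hix) !andbF.
  exact: e.
- move=> [p1 p2] [q1 q2]; rewrite !in_setU1 => /orP [/eqP [-> ->]|hp] /orP [/eqP [-> ->]|hq] /=.
  + by rewrite ltnn.
  + case: (b _ hq) => /= _ h2; apply/negP => /and3P [_ _ hh]; move: hh h2 => /=; lia.
  + move: (d _ r hp); rewrite inE hr orbT => /(_ isT) /=.
    by apply: contra => /and3P [-> -> _].
  + exact: (f _ _ hp hq).
- move=> y /sM /g; apply: ltnW.
- move=> i hi; have [-> | hix] := eqVneq i x.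
    by rewrite hw /wd ex_setU1 /= eqxx orbT.
  rewrite /wd ex_setU1 /= [x == i]eq_sym (negbTE hix) /=.
  by apply: h; move: hix; rewrite ordeq /=; lia.
Qed.

Lemma good_ex k : k <= N -> exists L R P, good k L R P.
Proof.
elim: k => [_|k IH hk]; first by exists set0, set0, set0; exact: good0.
have hk' : k < N := hk.
case: (IH (ltnW hk)) => L [R [P G]].
case hw : (w (Ordinal hk')).
- case: (set_0Vmem R) => [hR0 | [r0 hr0]].
  + by exists (Ordinal hk' |: L), R, P; apply: stepL.
  + case: (@arg_maxnP _ r0 (fun r => r \in R) (fun r : 'I_N => nat_of_ord r) hr0) => r hr rmax.
    by exists L, (R :\ r), ((r, Ordinal hk') |: P); apply: stepP.
- by exists L, (Ordinal hk' |: R), P; apply: stepR.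
Qed.

End Surj.

End S.

Theorem proposition1p6 (N : nat) : bijective (@word N).
Proof.
have surj : forall w, exists pi, @word N pi = w.
  move=> w; case: (good_ex w (leqnn N)) => L [R [P G]]; case: (good_elp G) => He hw.
  exists (exist _ (L, R, P) He); apply/ffunP => i; rewrite /word ffunE /=; exact: hw.
have surj' : forall w, exists pi, @word N pi == w.
  by move=> w; case: (surj w) => pi hpi; exists pi; rewrite hpi.
exists (fun w => xchoose (surj' w)).
- by move=> pi; apply: word_inj; apply/eqP; exact: (xchooseP (surj' (word pi))).
- by move=> w; apply/eqP; exact: xchooseP (surj' w).
Qed.
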